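(* For any $\delta>0$ and any $H\subseteq[n]$ such that $|H|>8\log\frac{4}{\delta}$, the algorithm $C_H$ is $(\varepsilon,\frac{\delta}{2})$-differentially private for \[ \varepsilon=\ln\left(1+\sqrt{\frac{32\log\frac{4}{\delta}}{|H|}}\right)<\sqrt{\frac{32\log\frac{4}{\delta}}{|H|}}. \]
   Context: For a fixed set $H\subseteq[n]$, the algorithm $C_H$ on input $(x_1,\dots,x_n)\in\{0,1\}^n$ draws $B\sim\mathrm{Bin}(|H|,1/2)$ and outputs $\sum_{i\notin H}x_i+B$. An algorithm $M$ on $\{0,1\}^n$ is $(\varepsilon,\delta)$-differentially private if for all $X,X'$ differing in one coordinate and every set $W$ of outputs, $\Pr[M(X)\in W]\le e^{\varepsilon}\Pr[M(X')\in W]+\delta$. $\log$ is the natural logarithm. *)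

(* Defs.v *)
From HB Require Import structures.
From mathcomp Require Import all_boot all_order all_algebra.
From mathcomp Require Import reals sequences exp.
Set Implicit Arguments. Unset Strict Implicit. Unset Printing Implicit Defensive.
Import Order.TTheory GRing.Theory Num.Theory.
Local Open Scope ring_scope.

(* A randomized algorithm on {0,1}^n with outputs in {0,...,m-1}, given by
   its output probability mass function. *)
Definition mechanism (R : realType) (n m : nat) :=
  {ffun 'I_n -> bool} -> 'I_m -> R.

Definition prob_in (R : realType) (n m : nat) (M : mechanism R n m)
  (X : {ffun 'I_n -> bool}) (W : {set 'I_m}) : R :=
  \sum_(k in W) M X k.

Definition neighbors (n : nat) (X X' : {ffun 'I_n -> bool}) : Prop :=
  exists i : 'I_n, X i != X' i /\ forall j, j != i -> X j = X' j.

Definition diff_private (R : realType) (n m : nat) (eps delta : R)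
  (M : mechanism R n m) : Prop :=
  forall X X', neighbors X X' ->
  forall W : {set 'I_m}, prob_in M X W <= expR eps * prob_in M X' W + delta.

(* C_H: outputs sum_{i notin H} x_i + B with B ~ Bin(|H|, 1/2);
   the output lies in {0,...,n}.  Pr[C_H(X) = k] = C(|H|, k - s) / 2^|H|
   when s <= k, where s = sum_{i notin H} x_i, and 0 otherwise. *)
Definition C_H (R : realType) (n : nat) (H : {set 'I_n}) : mechanism R n n.+1 :=
  fun X k =>
    let s := (\sum_(i | i \notin H) (X i : nat))%N in
    if (s <= k)%N then ('C(#|H|, k - s))%:R / 2 ^+ #|H| else 0.

(* Main.v *)
Require Import Defs.
From HB Require Import structures.
From mathcomp Require Import all_boot all_order all_algebra.
From mathcomp Require Import reals sequences exp.
From mathcomp Require Import ring lra boolp classical_sets topology normedtype derive realfun.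
Import Order.TTheory GRing.Theory Num.Theory numFieldNormedType.Exports.
Local Open Scope classical_set_scope.
Local Open Scope ring_scope.

Local Open Scope classical_set_scope.
Local Open Scope ring_scope.

Section A.
Variable R : realType.

Lemma incr_of_deriv (f df : R -> R) (a b : R) : a <= b ->
  (forall x : R, is_derive x (1:R) f (df x)) -> (forall x, a <= x <= b -> 0 <= df x) ->
  f a <= f b.
Proof.
move=> ab fd dpos.
have [|c cab E] := MVT_segment ab (fun x _ => fd x).
  apply/continuous_subspaceT=> r.
  exact/differentiable_continuous/derivable1_diffP.
rewrite -subr_ge0 E mulr_ge0 ?subr_ge0 //; apply: dpos.
by move: cab; rewrite in_itv /=.
Qed.

Lemma lemA (y : R) : 0 <= y -> (1 - y) * expR y <= (1 + y) * expR (- y).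
Proof.
move=> y0.
pose g (x : R) := (1 + x) * expR (- x) - (1 - x) * expR x.
have : g 0 <= g y.
  apply: (@incr_of_deriv g (fun x => x * (expR x - expR (- x)))) => //.
    move=> x. rewrite /g.
    apply: is_derive_eq.
    rewrite -![_ *: _]/(_ * _); ring.
  move=> x /andP[x0 _]; rewrite mulr_ge0 // subr_ge0 ler_expR; lra.
rewrite /g oppr0 expR0 => H; lra.
Qed.
End A.



Section B.
Variable R : realType.

Lemma dexp (p : R -> R) (dp x : R) : is_derive x 1 p dp ->
  is_derive x 1 (fun y => expR (p y)) (expR (p x) * dp).
Proof.
move=> H.
exact: (@is_derive1_comp R expR p x (expR (p x)) dp).
Qed.

Lemma hoeff (u : R) : 0 <= u -> expR u + expR (- u) <= 2 * expR (u ^+ 2 / 2).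
Proof.
move=> u0.
pose g (x : R) := - (expR (x - x ^+ 2 / 2) + expR (- x - x ^+ 2 / 2)).
have : g 0 <= g u.
  apply: (@incr_of_deriv R g (fun x => expR (- x ^+ 2 / 2) *
     ((1 + x) * expR (- x) - (1 - x) * expR x))) => //.
    move=> x. rewrite /g.
    apply: is_derive_eq.
    have e1 : expR (x - x^+2/2) = expR (- x^+2/2) * expR x.
      rewrite -expRD; congr expR; lra.
    have e2 : expR (- x - x^+2/2) = expR (- x^+2/2) * expR (- x).
      by rewrite -expRD; congr expR; lra.
    rewrite e1 e2 -![_ *: _]/(_ * _).
    have -> : 2^-1 * (x * 1 + x * 1) = x :> R by lra.
    set E := expR _; set A := expR x; set B := expR (- x).
    rewrite mulr0 add0r. ring.
  move=> x /andP[x0 _]; rewrite mulr_ge0 ?expR_ge0 // subr_ge0; exact: lemA.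
rewrite /g.
have e1 : expR (u - u^+2/2) = expR (- (u^+2/2)) * expR u.
  by rewrite -expRD; congr expR; lra.
have e2 : expR (- u - u^+2/2) = expR (- (u^+2/2)) * expR (- u).
  by rewrite -expRD; congr expR; lra.
rewrite e1 e2 expRN.
have -> : (0:R) - 0^+2/2 = 0 by rewrite expr2 mulr0; lra.
have -> : - (0:R) - 0^+2/2 = 0 by rewrite expr2 mulr0; lra.
rewrite expR0 -mulrDr.
set a := expR _.
have a0 : 0 < a by exact: expR_gt0.
rewrite lerN2 ler_pdivrMl // => H.
lra.
Qed.
End B.



Section C.
Variable R : realType.

Lemma binom_exp (h : nat) (a b : R) :
  \sum_(j < h.+1) 'C(h, j)%:R * (expR a ^+ (h - j) * expR b ^+ j) = (expR a + expR b) ^+ h.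
Proof.
rewrite exprDn; apply: eq_bigr => j _; by rewrite mulr_natl.
Qed.

Lemma exp14 : expR (1/4 : R) <= 2.
Proof.
have h1 := @expR_ge1Dx R (- (1/4)).
have h2 : expR (1/4 : R) * expR (- (1/4)) = 1 by rewrite -expRD subrr expR0.
have h3 : 0 < expR (1/4 : R) := expR_gt0 _.
nra.
Qed.

Definition wt (dir : bool) (h j : nat) : R :=
  if dir then h%:R - 2 * j%:R else 2 * j%:R - h%:R.

Lemma tail_bound (h : nat) (c : R) (bad : nat -> bool) (dir : bool) :
  0 < c -> c < 2 -> 2 <= h%:R * c ->
  (forall j, (j <= h)%N -> bad j ->
     (2 + c) * (if dir then j else (h - j)%N)%:R < h%:R + 1) ->
  \sum_(j < h.+1) (if bad j then 'C(h, j)%:R / 2 ^+ h else 0)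
    <= 2 * expR (- (h%:R * c ^+ 2 / 32)).
Proof.
move=> c0 c2 hc Hbad.
set u := c / 4.
set th := (h%:R * c - 2) / (2 + c).
have thE : th * (2 + c) = h%:R * c - 2 by rewrite /th mulfVK // gt_eqF //; lra.
have u0 : 0 <= u by rewrite /u; lra.
have step1 : \sum_(j < h.+1) (if bad j then 'C(h, j)%:R / 2 ^+ h else 0)
   <= \sum_(j < h.+1) ('C(h, j)%:R / 2 ^+ h * expR (u * (wt dir h j - th))).
  apply: ler_sum => j _.
  have Cge0 : 0 <= 'C(h, j)%:R / 2 ^+ h :> R by rewrite divr_ge0 // exprn_ge0.
  case: ifP => bj; last by rewrite mulr_ge0 // expR_ge0.
  rewrite -[X in X <= _]mulr1 ler_wpM2l // -expR0 ler_expR mulr_ge0 //.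
  have jh : (j <= h)%N by rewrite -ltnS ltn_ord.
  move: (Hbad j jh bj).
  rewrite /wt; case: dir {Hbad}.
    move=> H.
    have : 0 <= (h%:R - 2 * j%:R - th) * (2 + c).
      rewrite mulrBl thE. nra.
    rewrite pmulr_lge0 //; lra.
  rewrite natrB // => H.
  have : 0 <= (2 * j%:R - h%:R - th) * (2 + c).
    rewrite mulrBl thE. nra.
  rewrite pmulr_lge0 //; lra.
have key : forall j : 'I_h.+1, expR (u * wt dir h j) =
   (if dir then expR u ^+ (h - j) * expR (- u) ^+ j
    else expR (- u) ^+ (h - j) * expR u ^+ j).
  move=> j; have jh : (j <= h)%N by rewrite -ltnS ltn_ord.
  rewrite /wt; case: (dir) => /=; rewrite -!expRM_natl -expRD; congr (expR _);
    rewrite natrB //; ring.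
have step2 : \sum_(j < h.+1) ('C(h, j)%:R / 2 ^+ h * expR (u * (wt dir h j - th)))
   = expR (- (u * th)) / 2 ^+ h * (expR u + expR (- u)) ^+ h.
  have -> : (expR u + expR (- u)) ^+ h =
     \sum_(j < h.+1) 'C(h, j)%:R * expR (u * wt dir h j).
    under eq_bigr do rewrite key.
    case: (dir); rewrite binom_exp //; by rewrite addrC.
  rewrite mulr_sumr; apply: eq_bigr => j _.
  rewrite mulrBr expRD -mulrN; ring.
have step3 : (expR u + expR (- u)) ^+ h <= (2 * expR (u ^+ 2 / 2)) ^+ h.
  by rewrite lerXn2r ?nnegrE ?addr_ge0 ?mulr_ge0 ?expR_ge0 // hoeff.
have th0 : 0 <= th.
  by rewrite /th divr_ge0 ?subr_ge0 //; lra.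
have P1 : 0 <= c * (2 - c) * th.
  by apply: mulr_ge0 => //; apply: mulr_ge0; lra.
have expo : - (u * th) + h%:R * (u ^+ 2 / 2) <= 1/4 - h%:R * c ^+ 2 / 32.
  have E : h%:R * c ^+ 2 = c * (th * (2 + c)) + 2 * c by rewrite thE; field.
  rewrite /u.
  have -> : h%:R * ((c / 4) ^+ 2 / 2) = (h%:R * c ^+ 2) / 32 by field.
  rewrite E.
  have P2 : 0 <= 2 * (c * th) - c * (c * th).
    by have -> : 2 * (c * th) - c * (c * th) = c * (2 - c) * th by ring.
  lra.
apply: (le_trans step1); rewrite step2.
have h2 : (0:R) < 2 ^+ h by rewrite exprn_gt0.
apply: le_trans.
  apply: ler_wpM2l; last exact: step3.
  by rewrite divr_ge0 ?expR_ge0 // ltW.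
rewrite exprMn mulrA divfK ?gt_eqF // -expRM_natl -expRD.
apply: (le_trans (y := expR (1/4 - h%:R * c ^+ 2 / 32))).
  by rewrite ler_expR.
rewrite expRD ler_wpM2r ?expR_ge0 //; exact: exp14.
Qed.
End C.



Section D.
Variable R : realType.

Lemma split_bad (m : nat) (p q : 'I_m -> R) (e : R) (W : {set 'I_m}) :
  0 <= e -> (forall k, 0 <= p k) -> (forall k, 0 <= q k) ->
  \sum_(k in W) p k <= e * \sum_(k in W) q k +
     \sum_k (if e * q k < p k then p k else 0).
Proof.
move=> e0 p0 q0.
rewrite mulr_sumr.
apply: (@le_trans _ _ (\sum_(k in W) (e * q k + (if e * q k < p k then p k else 0)))).
  apply: ler_sum => k _; case: ifP => H.
    by rewrite lerDr mulr_ge0.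
  by rewrite addr0; move/negbT: H; rewrite -leNgt.
rewrite big_split lerD2l /= [X in _ <= X](bigID (mem W)) /= lerDl.
by apply: sumr_ge0 => k _; case: ifP.
Qed.

Lemma reindex_tail (m s h : nat) (F : nat -> R) : (forall j, 0 <= F j) ->
  (forall j, (h < j)%N -> F j = 0) ->
  \sum_(k < m) (if (s <= k)%N then F (k - s)%N else 0) <= \sum_(j < h.+1) F j.
Proof.
move=> F0 Fh.
set G := fun k : nat => if (s <= k)%N then F (k - s)%N else 0.
have G0 k : 0 <= G k by rewrite /G; case: ifP.
have -> : \sum_(k < m) (if (s <= k)%N then F (k - s)%N else 0) = \sum_(k < m) G k by [].
rewrite -(big_mkord xpredT G) -(big_mkord xpredT F).
apply: (@le_trans _ _ (\sum_(0 <= k < m + (s + h.+1)) G k)).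
  rewrite (@big_cat_nat _ _ _ m 0 (m + (s + h.+1))) ?leq_addr //= lerDl.
  by rewrite sumr_ge0.
rewrite (@big_cat_nat _ _ _ (s + h.+1) 0 (m + (s + h.+1))) ?leq_addl //=.
rewrite [X in _ + X]big1_seq ?addr0; last first.
  move=> k /andP[_]; rewrite mem_index_iota => /andP[hk _].
  rewrite /G (leq_trans (leq_addr _ _) hk) Fh //.
  by rewrite ltn_subRL; rewrite addnS in hk.
rewrite (@big_cat_nat _ _ _ s 0 (s + h.+1)) ?leq_addr //=.
rewrite big1_seq ?add0r; last first.
  by move=> k /andP[_]; rewrite mem_index_iota /G => /andP[_ ks]; rewrite leqNgt ks.
rewrite -{1}(add0n s) big_addn addKn.
apply: ler_sum => i _; by rewrite /G leq_addl addnK.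
Qed.
End D.



Lemma sum_decomp (n : nat) (H : {set 'I_n}) (i : 'I_n) (Y : {ffun 'I_n -> bool}) :
  (\sum_(j | j \notin H) (Y j : nat))%N =
  ((if i \notin H then (Y i : nat) else 0) + \sum_(j | (j \notin H) && (j != i)) (Y j : nat))%N.
Proof.
case: ifP => iH.
  by rewrite (bigD1 i).
rewrite add0n; apply: eq_bigl => j; case jH: (j \notin H) => //=.
by apply/esym/negP => /eqP ji; rewrite -ji jH in iH.
Qed.

Lemma nb_rel (n : nat) (H : {set 'I_n}) (X X' : {ffun 'I_n -> bool}) :
  neighbors X X' ->
  let s := (\sum_(i | i \notin H) (X i : nat))%N in
  let s' := (\sum_(i | i \notin H) (X' i : nat))%N in
  s' = s \/ s' = s.+1 \/ s = s'.+1.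
Proof.
move=> [i [Xi Xj]] /=.
rewrite !(@sum_decomp n H i).
have -> : (\sum_(j | (j \notin H) && (j != i)) (X' j : nat) =
           \sum_(j | (j \notin H) && (j != i)) (X j : nat))%N.
  by apply: eq_bigr => j /andP[_ ji]; rewrite Xj.
case: (i \notin H); last by left.
move: Xi; case: (X i); case: (X' i) => //= _.
  by right; right.
by right; left.
Qed.




Section E.
Variable R : realType.

Definition Pm (h s k : nat) : R := if (s <= k)%N then 'C(h, k - s)%:R / 2 ^+ h else 0.

Lemma bad_up (h s j : nat) (c : R) : 0 <= c -> (j <= h)%N ->
  (1 + c) * Pm h s.+1 (s + j) < 'C(h, j)%:R / 2 ^+ h ->
  (2 + c) * j%:R < h%:R + 1.
Proof.
move=> c0 jh.
case: j jh => [|i] jh.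
  by rewrite mulr0 => _; rewrite ltr_wpDl // ler0n.
rewrite /Pm addnS ltnS leq_addr subSS addKn.
have h2 : (0:R) < 2 ^+ h by rewrite exprn_gt0.
rewrite mulrA ltr_pM2r ?invr_gt0 // => Hb.
have E := mul_bin_left h i.
have ER : i.+1%:R * 'C(h, i.+1)%:R = (h - i)%:R * 'C(h, i)%:R :> R.
  by rewrite -!natrM E.
have ih : (i <= h)%N by apply: ltnW.
rewrite natrB // in ER.
have Ci : (0:R) < 'C(h, i)%:R by rewrite ltr0n bin_gt0.
set a := 'C(h, i)%:R in Ci ER Hb; set b := 'C(h, i.+1)%:R in ER Hb.
rewrite -addn1 natrD in ER *.
set x := i%:R in ER *.
have x0 : (0:R) <= x by rewrite /x ler0n.
set y := h%:R in ER *.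
have x1 : 0 < x + 1 by apply: ltr_wpDl x0 ltr01.
have : (x + 1) * ((1 + c) * a) < (x + 1) * b by rewrite ltr_pM2l.
rewrite ER => H1.
have : (1 + c) * (x + 1) * a < (y - x) * a.
  by move: H1; rewrite mulrA [(x + 1) * (1 + c)]mulrC.
rewrite ltr_pM2r // => H2.
have -> : (2 + c) * (x + 1) = (1 + c) * (x + 1) + (x + 1) by ring.
have -> : y + 1 = (y - x) + (x + 1) by ring.
by rewrite ltrD2r.
Qed.

Lemma bad_down (h s j : nat) (c : R) : 0 <= c -> (j <= h)%N ->
  (1 + c) * Pm h s (s.+1 + j) < 'C(h, j)%:R / 2 ^+ h ->
  (2 + c) * (h - j)%N%:R < h%:R + 1.
Proof.
move=> c0 jh.
rewrite /Pm addSn leqW ?leq_addr // subSn ?leq_addr // addKn.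
have h2 : (0:R) < 2 ^+ h by rewrite exprn_gt0.
rewrite mulrA ltr_pM2r ?invr_gt0 // => Hb.
case: (ltngtP j h) jh => // [jlt|->] _; last first.
  by rewrite subnn mulr0 ltr_wpDl // ler0n.
have E := mul_bin_left h j.
have ER : j.+1%:R * 'C(h, j.+1)%:R = (h - j)%N%:R * 'C(h, j)%:R :> R.
  by rewrite -!natrM E.
have Cj : (0:R) < 'C(h, j.+1)%:R by rewrite ltr0n bin_gt0.
have jh2 : (j <= h)%N := ltnW jlt.
rewrite natrB // in ER *.
set a := 'C(h, j)%:R in ER Hb; set b := 'C(h, j.+1)%:R in Cj ER Hb.
rewrite -addn1 natrD in ER.
set x := j%:R in ER *.
set y := h%:R in ER *.
have yx : 0 < y - x by rewrite subr_gt0 /x /y ltr_nat.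
have : (y - x) * ((1 + c) * b) < (y - x) * a by rewrite ltr_pM2l.
rewrite mulrA -ER => H1.
have : (1 + c) * (y - x) * b < (x + 1) * b.
  by move: H1; rewrite [(y - x) * (1 + c)]mulrC.
rewrite ltr_pM2r // => H2.
have -> : (2 + c) * (y - x) = (1 + c) * (y - x) + (y - x) by ring.
have -> : y + 1 = (x + 1) + (y - x) by ring.
by rewrite ltrD2r.
Qed.
End E.



Lemma sum_bin (R : realType) (h : nat) : \sum_(j < h.+1) ('C(h, j)%:R : R) = 2 ^+ h.
Proof.
have := exprDn (1 : R) 1 h.
rewrite -[1 + 1]/(2 : R) => ->.
by apply: eq_bigr => j _; rewrite !expr1n mul1r.
Qed.

Theorem claim4p4 (R : realType) (n : nat) (H : {set 'I_n}) (delta : R) :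
  0 < delta ->
  8 * ln (4 / delta) < (#|H|)%:R ->
  let eps := ln (1 + Num.sqrt (32 * ln (4 / delta) / (#|H|)%:R)) in
  diff_private eps (delta / 2) (C_H R H) /\
  (delta < 4 -> eps < Num.sqrt (32 * ln (4 / delta) / (#|H|)%:R)).
Proof.
move=> d0 hL eps.
rewrite /eps; clear eps.
set h := #|H| in hL *.
set L := ln (4 / delta) in hL *.
set c := Num.sqrt (32 * L / h%:R).
have c0 : 0 <= c := sqrtr_ge0 _.
have eE : expR (ln (1 + c)) = 1 + c.
  by apply: lnK; rewrite posrE; apply: ltr_wpDr c0 ltr01.
split; last first.
  move=> d4.
  have L0 : 0 < L.
    apply: ln_gt0; rewrite ltr_pdivlMr // mul1r //.
  have h0 : 0 < h%:R :> R.
    apply: lt_trans hL; rewrite mulr_gt0 //.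
  have cpos : 0 < c by rewrite sqrtr_gt0 divr_gt0 // mulr_gt0.
  have := @expR_gt1Dx R c (lt0r_neq0 cpos).
  rewrite -[1 + c < _]ltr_ln ?posrE ?expR_gt0 ?expRK //.
  by apply: ltr_wpDr c0 ltr01.
move=> X X' nb W.
have := @nb_rel n H X X' nb => /=.
set s := (\sum_(i | i \notin H) (X i : nat))%N.
set s' := (\sum_(i | i \notin H) (X' i : nat))%N.
move=> rel.
rewrite /prob_in.
change (\sum_(k in W) Pm R h s k <= expR (ln (1 + c)) * \sum_(k in W) Pm R h s' k + delta / 2).
have Pm0 : forall t k, 0 <= Pm R h t k.
  by move=> t k; rewrite /Pm; case: ifP => // _; rewrite divr_ge0 // exprn_ge0.
apply: le_trans (@split_bad R n.+1 (fun k => Pm R h s k) (fun k => Pm R h s' k) _ W (expR_ge0 _) (fun k => Pm0 s k) (fun k => Pm0 s' k)) _.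
apply: lerD; first exact: lexx.
rewrite eE.
pose F := fun j : nat => (if (1 + c) * Pm R h s' (s + j) < 'C(h, j)%:R / 2 ^+ h
   then 'C(h, j)%:R / 2 ^+ h else 0 : R).
have -> : \sum_(k < n.+1) (if (1 + c) * Pm R h s' k < Pm R h s k then Pm R h s k else 0)
   = \sum_(k < n.+1) (if (s <= k)%N then F (k - s)%N else 0).
  apply: eq_bigr => k _.
  have [sk|sk] := boolP (s <= k)%N.
    have -> : Pm R h s k = 'C(h, k - s)%:R / 2 ^+ h by rewrite /Pm sk.
    by rewrite /F subnKC.
  have -> : Pm R h s k = 0 by rewrite /Pm (negbTE sk).
  rewrite ltNge mulr_ge0 //.
  by apply: addr_ge0 c0.
have F0 : forall j, 0 <= F j.
  move=> j; rewrite /F; case: ifP => // _; rewrite divr_ge0 // exprn_ge0 //.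
have Fh : forall j, (h < j)%N -> F j = 0.
  by move=> j hj; rewrite /F bin_small // mul0r if_same.
have RI := @reindex_tail R n.+1 s h F F0 Fh.
apply: (le_trans RI).
have [d2|d2] := leP 2 delta.
  apply: (@le_trans _ _ (\sum_(j < h.+1) ('C(h, j)%:R / 2 ^+ h))).
    apply: ler_sum => j _; rewrite /F; case: ifP => // _.
    by rewrite divr_ge0 // exprn_ge0.
  rewrite -mulr_suml sum_bin mulfV ?gt_eqF ?exprn_gt0 //.
  lra.
have L14 : 1/4 < L.
  have e2 : expR (1/4 : R) < 4 / delta.
    apply: (le_lt_trans (exp14 R)).
    by rewrite ltr_pdivlMr //; lra.
  rewrite /L -[1/4 in X in X < _](expRK (1/4 : R)).
  by rewrite ltr_ln ?posrE ?expR_gt0 // (lt_trans (expR_gt0 _) e2).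
have h0 : 0 < h%:R :> R.
  by apply: lt_trans hL; rewrite mulr_gt0 //; apply: lt_trans L14; lra.
have csq : c ^+ 2 = 32 * L / h%:R.
  by rewrite /c sqr_sqrtr // divr_ge0 // ?ler0n // mulr_ge0 //; apply: ltW; apply: lt_trans L14; lra.
have csq2 : c * c = 32 * L / h%:R by rewrite -csq expr2.
have hcsq : h%:R * (c * c) = 32 * L.
  by rewrite csq2 mulrC divfK ?gt_eqF.
have cpos : 0 < c.
  by rewrite sqrtr_gt0 divr_gt0 // mulr_gt0 //; apply: lt_trans L14; lra.
have c2 : c < 2.
  rewrite ltNge; apply/negP => c2'.
  have : 2 * 2 <= c * c by apply: ler_pM.
  rewrite csq2 ler_pdivlMr // => H1.
  have : 2 * 2 * h%:R < 32 * L by lra.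
  lra.
have hc : 2 <= h%:R * c.
  have hc0 : 0 <= h%:R * c by rewrite mulr_ge0 // ltW.
  have : (h%:R * c) * c <= (h%:R * c) * 2 by rewrite ler_wpM2l // ltW.
  rewrite -mulrA hcsq.
  move: hc0; set y := h%:R * c => hc0 H1.
  lra.
have [dir Hd] : exists dir : bool, forall j, (j <= h)%N ->
    (1 + c) * Pm R h s' (s + j) < 'C(h, j)%:R / 2 ^+ h ->
    (2 + c) * (if dir then j else (h - j)%N)%:R < h%:R + 1.
  case: rel => [es | [es | es]].
  - exists true => j jh; rewrite es /Pm leq_addr addKn => Hb.
    exfalso; move: Hb; apply/negP; rewrite -leNgt.
    by rewrite mulrDl mul1r lerDl mulr_ge0 // divr_ge0 // exprn_ge0.
  - exists true => j jh; rewrite es; exact: bad_up.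
  - exists false => j jh; rewrite es; exact: bad_down.
have := @tail_bound R h c (fun j => (1 + c) * Pm R h s' (s + j) < 'C(h, j)%:R / 2 ^+ h) dir cpos c2 hc Hd.
move=> T; apply: (le_trans T).
rewrite expr2 hcsq.
have -> : 32 * L / 32 = L by field.
rewrite expRN /L lnK ?posrE ?divr_gt0 //.
rewrite invf_div.
lra.
Qed.
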